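(* Let $X$ be a compact metric space, $f\colon X\to X$ a chain transitive continuous map and $D\in\mathcal{D}(f)$. Suppose that for any $\epsilon>0$ there is $\delta>0$ such that every $\delta$-pseudo orbit $(x_i)_{i\ge0}$ of $f$ with $x_0\in D$ is $\epsilon$-shadowed by some $x\in D$. Then for any $y,z\in D$ and $\epsilon>0$ there is $w\in D$ such that $d(z,w)\le\epsilon$ and $\limsup_{k\to\infty}d(f^k(y),f^k(w))\le\epsilon$.
   Context: A $\delta$-chain of $f$ is a finite sequence $(x_i)_{i=0}^k$, $k>0$, with $d(f(x_i),x_{i+1})\le\delta$ for all $i<k$; it is a $\delta$-cycle of length $k$ if $x_0=x_k$. $f$ is chain transitive if for all $x,y\in X$ and $\delta>0$ there is a $\delta$-chain from $x$ to $y$. For $\delta>0$, $m(f,\delta)$ is the gcd of the lengths of $\delta$-cycles; $x\sim_{f,\delta}y$ iff there is a $\delta$-chain from $x$ to $y$ whose length is divisible by $m(f,\delta)$; $x\sim_f y$ iff $x\sim_{f,\delta}y$ for all $\delta>0$; $\mathcal{D}(f)$ is the set of equivalence classes of $\sim_f$. A $\delta$-pseudo orbit is a sequence $(x_i)_{i\ge0}$ with $d(f(x_i),x_{i+1})\le\delta$ for all $i\ge0$; it is $\epsilon$-shadowed by $x$ if $d(f^i(x),x_i)\le\epsilon$ for all $i\ge0$. *)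

(* Defs.v *)
From HB Require Import structures.
From mathcomp Require Import all_boot all_order all_algebra.
From mathcomp Require Import all_classical all_reals all_analysis.
Set Implicit Arguments.
Unset Strict Implicit.
Unset Printing Implicit Defensive.
Import Order.TTheory GRing.Theory Num.Theory.
Local Open Scope classical_set_scope.
Local Open Scope ring_scope.

Section Defs.
Context {R : realType} {X : metricType R}.

Definition delta_chain (f : X -> X) (delta : R) (s : nat -> X) (k : nat) : Prop :=
  (0 < k)%N /\ forall i, (i < k)%N -> mdist (f (s i)) (s i.+1) <= delta.

Definition chain_from_to (f : X -> X) (delta : R) (x y : X) (k : nat) : Prop :=
  exists s : nat -> X, [/\ delta_chain f delta s k, s 0%N = x & s k = y].

Definition cycle_length (f : X -> X) (delta : R) (k : nat) : Prop :=
  exists x : X, chain_from_to f delta x x k.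

Definition chain_transitive (f : X -> X) : Prop :=
  forall (x y : X) (delta : R), 0 < delta -> exists k, chain_from_to f delta x y k.

(* m is the gcd of the (possibly infinite) set of lengths of delta-cycles,
   i.e. m = m(f, delta): m divides every length, and every common divisor
   of the lengths divides m. *)
Definition is_m (f : X -> X) (delta : R) (m : nat) : Prop :=
  (forall k, cycle_length f delta k -> (m %| k)%N) /\
  (forall d, (forall k, cycle_length f delta k -> (d %| k)%N) -> (d %| m)%N).

Definition rel_delta (f : X -> X) (delta : R) (x y : X) : Prop :=
  exists m, is_m f delta m /\ exists k, chain_from_to f delta x y k /\ (m %| k)%N.

Definition rel_f (f : X -> X) (x y : X) : Prop :=
  forall delta : R, 0 < delta -> rel_delta f delta x y.

Definition in_Df (f : X -> X) (D : set X) : Prop :=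
  exists x : X, D = [set y | rel_f f x y].

Definition pseudo_orbit (f : X -> X) (delta : R) (s : nat -> X) : Prop :=
  forall i, mdist (f (s i)) (s i.+1) <= delta.

Definition shadowed (f : X -> X) (eps : R) (s : nat -> X) (x : X) : Prop :=
  forall i, mdist (iter i f x) (s i) <= eps.

End Defs.

(* Main.v *)
Require Import Defs.
From HB Require Import structures.
From mathcomp Require Import all_boot all_order all_algebra.
From mathcomp Require Import all_classical all_reals all_analysis.
Import Order.TTheory GRing.Theory Num.Theory.
Local Open Scope classical_set_scope.
Local Open Scope ring_scope.

From mathcomp Require Import zify.
Lemma esup_ev_le (R : realType) (u : nat -> R) (e : R) (K : nat) :
  (forall k, (K <= k)%N -> u k <= e) ->
  (limn_esup (fun k => (u k)%:E) <= e%:E)%E.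
Proof.
move=> H.
rewrite limn_esup_lim.
have := @cvg_esups_inf R (fun k => (u k)%:E); move/(cvg_lim (@ereal_hausdorff R)) => ->.
apply: (@le_trans _ _ (esups (fun k => (u k)%:E) K)).
  by apply: ereal_inf_lbound; exists K.
rewrite /esups /=; apply: ub_ereal_sup => _ [k /= Hk <-].
by rewrite lee_fin H.
Qed.
Lemma recur_pair (R : realType) (X : metricType R) (v : nat -> X) (e : R) :
  compact [set: X] -> 0 < e ->
  exists a b, (a < b)%N /\ mdist (v a) (v b) < e.
Proof.
move=> hc e0.
have [p [_ cp]] := hc (v @ \oo) _ filterT.
have e20 : 0 < e / 2 by rewrite divr_gt0.
have Hk : forall N, exists k, (N <= k)%N /\ ball p (e / 2) (v k).
  move=> N.
  have FA : (v @ \oo) [set x | exists2 k, (N <= k)%N & v k = x].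
    by exists N => // k /= Nk; exists k.
  have [x [[k /= Nk <-] bx]] := cp _ (ball p (e/2)) FA (nbhsx_ballx p _ e20).
  by exists k.
have [a [_ ba]] := Hk 0%N.
have [b [ab bb]] := Hk a.+1.
exists a, b; split => //.
have := ball_splitl (ball_sym ba) (ball_sym bb).
by rewrite ballEmdist.
Qed.

Section NT.
Local Open Scope nat_scope.
Variable S : nat -> Prop.
Hypothesis Sadd : forall a b, S a -> S b -> S (a + b).
Hypothesis Spos : forall a, S a -> (0 < a)%N.

Lemma S_lin k x y : S x -> S y -> S (k * x + y).
Proof.
move=> Sx Sy; elim: k => [|k IH]; first by rewrite mul0n add0n.
by rewrite mulSn -addnA; apply: Sadd.
Qed.

Lemma S_gcd c0 : S c0 -> exists g, [/\ (0 < g)%N, (forall s, S s -> (g %| s)%N)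
   & exists a b, [/\ S a, S b & a = b + g]%N].
Proof.
move=> Sc0.
pose P n := exists a b, [/\ S a, S b, a = b + n & 0 < n]%N.
have Pc : P c0.
  by exists (c0 + c0)%N, c0; split => //; [exact: Sadd | exact: Spos].
have exP : exists n, `[< P n >] by exists c0; apply/asboolP.
case: (ex_minnP exP) => g /asboolP [a [b [Sa Sb eab g0]]] gmin.
exists g; split => //; last by exists a, b.
move=> s Ss; rewrite /dvdn; apply/eqP.
have := div.ltn_pmod s g0; have ediv := divn_eq s g.
move: ediv; set r := s %% g; set q := s %/ g => ediv.
case: (posnP r) => [-> //| r0] rg.
have Pr : P r.
  exists (s + (q * b + b))%N, (q * a + b)%N; split => //.
  - by apply: Sadd => //; apply: S_lin.
  - by apply: S_lin.
  - rewrite eab mulnDr; lia.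
have := gmin r (asboolT Pr); lia.
Qed.

Lemma S_frob g a b : (0 < g)%N -> (forall s, S s -> (g %| s)%N) -> S a -> S b -> a = (b + g)%N ->
  exists T, forall n, (T <= n)%N -> (g %| n)%N -> S n.
Proof.
move=> g0 gdiv Sa Sb eab.
have /dvdnP [q bq] := gdiv b Sb.
have q0 : (0 < q)%N by have := Spos b Sb; rewrite bq; case: q {bq} => //.
exists (q * q * g)%N => n Tn /dvdnP [N nN].
have NT : (q * q <= N)%N.
  by rewrite -(leq_pmul2r g0) -nN.
have eN := divn_eq N q.
move: eN; set t := N %/ q; set r := N %% q => eN.
have rq : (r < q)%N by apply: div.ltn_pmod.
have tq : (q <= t)%N by rewrite /t leq_divRL.
have -> : n = ((t - r - 1) * b + (r * a + b))%N.
  rewrite nN eN eab bq.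
  have -> : t = ((t - r - 1) + r + 1)%N by lia.
  rewrite !mulnDl !mulnDr; lia.
by apply: S_lin => //; apply: S_lin.
Qed.
End NT.
Section Chains.
Variables (R : realType) (X : metricType R) (f : X -> X) (d : R).

Lemma chain_cat x y w k1 k2 : chain_from_to f d x y k1 -> chain_from_to f d y w k2 ->
  chain_from_to f d x w (k1 + k2).
Proof.
move=> [s1 [[k10 h1] e10 e1k]] [s2 [[k20 h2] e20 e2k]].
exists (fun i => if (i <= k1)%N then s1 i else s2 (i - k1)%N); split.
- split; first by rewrite addn_gt0 k10.
  move=> i ik /=.
  case: (ltnP i k1) => ik1.
    by rewrite (ltnW ik1); apply: h1.
  have Hs : (if (i <= k1)%N then s1 i else s2 (i - k1)%N) = s2 (i - k1)%N.
    case: ifP => // ik2.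
    have -> : i = k1 by apply/eqP; rewrite eqn_leq ik2 ik1.
    by rewrite subnn e20 e1k.
  rewrite Hs. have -> : (i.+1 - k1 = (i - k1).+1)%N by lia.
  apply: h2; lia.
- by rewrite leq0n.
- have -> : (k1 + k2 <= k1)%N = false by lia.
  by rewrite addKn.
Qed.

Lemma orbit_chain x p n : 0 <= d -> (0 < n)%N -> mdist (iter n f x) p <= d ->
  chain_from_to f d x p n.
Proof.
move=> d0 n0 hp.
exists (fun t => if (t < n)%N then iter t f x else p); split => //=.
- split => // i ilt; rewrite ilt.
  case: ltnP => ik.
    by rewrite -iterS mdistxx.
  have en : n = i.+1 by apply/eqP; rewrite eqn_leq ik ilt.
  by rewrite en iterS in hp.
- by rewrite n0.
- by rewrite ltnn.
Qed.

Lemma chain_orbit x y K : 0 <= d -> chain_from_to f d x (iter K f y) K ->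
  exists s, [/\ pseudo_orbit f d s, s 0%N = x & forall t, (K <= t)%N -> s t = iter t f y].
Proof.
move=> d0 [s1 [[K0 h1] e10 e1K]].
have Hs : forall t, (K <= t)%N ->
   (if (t <= K)%N then s1 t else iter t f y) = iter t f y.
  move=> t Kt; case: ifP => // tK.
  by have -> : t = K by apply/eqP; rewrite eqn_leq tK Kt.
exists (fun t => if (t <= K)%N then s1 t else iter t f y); split => //.
- move=> i /=.
  case: (ltnP i K) => iK.
    by rewrite (ltnW iK); apply: h1.
  rewrite (Hs i iK).
  by rewrite -iterS mdistxx.

Qed.

End Chains.
Arguments chain_cat {R X f d x y w k1 k2}.
Arguments orbit_chain {R X f d x p n}.
Arguments chain_orbit {R X f d x y K}.

Lemma ar1 (i j M : nat) : (i + M <= j)%N -> (0 < M)%N -> (0 < j - i)%N.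
Proof. lia. Qed.
Lemma ar2 (i j dd : nat) : (i + 1 <= j)%N -> dd = (j - i)%N -> (dd + i = j)%N.
Proof. lia. Qed.
Lemma ar3 (i j M L T dd C : nat) : (i + M <= j)%N -> M = (L + T + 1)%N -> dd = (j - i)%N ->
  C = (dd - L)%N -> (T <= C)%N /\ (L + C + i = j)%N.
Proof. lia. Qed.

Theorem lemma5p3 (R : realType) (X : metricType R) (f : X -> X)
  (hcpt : compact [set: X]) (hcont : continuous f)
  (hct : chain_transitive f) (D : set X) (hD : in_Df f D)
  (hsh : forall eps : R, 0 < eps -> exists2 delta : R, 0 < delta &
     forall s : nat -> X, pseudo_orbit f delta s -> D (s 0%N) ->
       exists2 x : X, D x & shadowed f eps s x) :
  forall (y z : X) (eps : R), D y -> D z -> 0 < eps ->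
    exists2 w : X, D w &
      mdist z w <= eps /\
      (limn_esup (fun k : nat => (mdist (iter k f y) (iter k f w))%:E) <= eps%:E)%E.
Proof.
move=> y z eps Dy Dz eps0.
have [del del0 Hsh] := hsh eps eps0.
have d0 : 0 <= del by apply: ltW.
case: (hD) => x0 Dx0.
have Rz : rel_f f x0 z by move: Dz; rewrite Dx0.
have Ry : rel_f f x0 y by move: Dy; rewrite Dx0.
have [m [[mdiv mgcd] [kz [chz mkz]]]] := Rz del del0.
have [m' [[mdiv' mgcd'] [ky [chy mky']]]] := Ry del del0.
have mm' : (m %| m')%N by apply: mgcd'.
have mky : (m %| ky)%N := dvdn_trans mm' mky'.
have [r chzx] := hct z x0 del del0.
have mr : (m %| r)%N.
  have : (m %| r + kz)%N by apply: mdiv; exists z; apply: chain_cat chzx chz.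
  by rewrite (dvdn_addl _ mkz).
have [L eL] : exists L, L = (r + ky)%N by eexists.
have chL : chain_from_to f del z y L by rewrite eL; apply: chain_cat chzx chy.
have mL : (m %| L)%N by rewrite eL dvdn_add.
pose S n := chain_from_to f del y y n.
have Sadd : forall a b, S a -> S b -> S (a + b)%N by move=> a b; apply: chain_cat.
have Spos : forall a, S a -> (0 < a)%N by move=> a [s [[]]].
have [c0 Sc0] := hct y y del del0.
have [g [g0 gdiv [a [b [Sa Sb eab]]]]] := @S_gcd S Sadd Spos c0 Sc0.
have [T HT] := @S_frob S Sadd Spos _ _ _ g0 gdiv Sa Sb eab.
have gm : (g %| m)%N.
  apply: mgcd => k [p chp].
  have [a1 c1] := hct y p del del0.
  have [b1 c2] := hct p y del del0.
  have h1 := gdiv _ (chain_cat c1 c2).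
  have h2 := gdiv _ (chain_cat (chain_cat c1 chp) c2).
  have E : (a1 + k + b1 = k + (a1 + b1))%N by rewrite addnAC addnC.
  by rewrite E (dvdn_addl _ h1) in h2.
have [M eM] : exists M, M = (L + T + 1)%N by eexists.
pose v k := iter ((k.+1) * M)%N f y.
have [a2 [b2 [ab vd]]] := @recur_pair R X v del hcpt del0.
have [i ei] : exists i, i = (a2.+1 * M)%N by eexists.
have [j ej] : exists j, j = (b2.+1 * M)%N by eexists.
have ij : (i + M <= j)%N.
  by rewrite ei ej -mulSnr leq_mul2r ltnS ab orbT.
have M0 : (0 < M)%N by rewrite eM addn1.
have i0 : (0 < i)%N by rewrite ei muln_gt0.
have [dd edd] : exists dd, dd = (j - i)%N by eexists.
have cyc : cycle_length f del dd.
  exists (iter i f y); apply: orbit_chain => //; first by rewrite edd; exact: ar1 ij M0.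
  rewrite -iterD (ar2 _ _ _ _ edd); last by apply: leq_trans ij; rewrite leq_add2l.
  by rewrite metric_sym ej ei; apply: ltW.
have mdd := mdiv _ cyc.
have [C eC] : exists C, C = (dd - L)%N by eexists.
have SC : S C.
  have [TC LCi] := ar3 _ _ _ _ _ _ _ ij eM edd eC.
  apply: HT; first by [].
  by rewrite eC dvdn_sub // ?(dvdn_trans gm mdd) ?(dvdn_trans gm mL).
have chj : chain_from_to f del y (iter j f y) i.
  apply: orbit_chain => //.
  by rewrite ej ei; apply: ltW.
have chall : chain_from_to f del z (iter j f y) j.
  have := chain_cat (chain_cat chL SC) chj.
  by have [_ ->] := ar3 _ _ _ _ _ _ _ ij eM edd eC.
have [s [pos s0 st]] := chain_orbit d0 chall.
have Ds0 : D (s 0%N) by rewrite s0.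
have [w Dw shw] := Hsh s pos Ds0.
exists w => //; split.
  by have := shw 0%N; rewrite s0 /= metric_sym.
apply: (@esup_ev_le _ _ _ j) => k jk.
by have := shw k; rewrite st // metric_sym.
Qed.
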